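(* Let $H=(H^1,\dots,H^m):\mathbb{R}^d\to\mathbb{R}^m$ be such that for each $i$ there are convex functions $H^i_1,H^i_2:\mathbb{R}^d\to\mathbb{R}$ with $H^i=H^i_1-H^i_2$, and set $G:=\sum_{i=1}^m(H^i_1+H^i_2)$. Assume that $\gamma>0$, $A$ is a positive definite symmetric $d\times d$ matrix, and $L:\mathbb{R}^d\to\mathbb{R}$ satisfies $D^2L\ge A$ in the sense of distributions. For $(x,\tau)\in\mathbb{R}^d\times\mathbb{R}^m$ define \[\Phi(x,\tau):=\sup_{p\in\mathbb{R}^d}\Big\{p\cdot x-L(p)-\gamma G(p)+\sum_{i=1}^m\tau_iH^i(p)\Big\}.\] Then $\Phi\in C^{1,1}(\mathbb{R}^d\times(-\gamma,\gamma)^m)$, $0\le D_x^2\Phi\le A^{-1}$ in the sense of distributions, and \[\partial_{\tau_i}\Phi(x,\tau)=H^i(D_x\Phi(x,\tau))\quad\text{for } i=1,\dots,m,\ (x,\tau)\in\mathbb{R}^d\times(-\gamma,\gamma)^m.\] *)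

(* Defs.v *)
From HB Require Import structures.
From mathcomp Require Import all_boot all_order all_algebra.
From mathcomp Require Import all_classical all_reals all_analysis.
Set Implicit Arguments. Unset Strict Implicit. Unset Printing Implicit Defensive.
Import Order.TTheory GRing.Theory Num.Theory.
Import numFieldNormedType.Exports.
Local Open Scope ring_scope.
Local Open Scope classical_set_scope.

Section Defs.
Context {R : realType}.

Definition dotv {n : nat} (u v : 'rV[R]_n) : R := \sum_(j < n) u 0 j * v 0 j.

Definition qform {n : nat} (M : 'M[R]_n) (v : 'rV[R]_n) : R := dotv (v *m M) v.

Definition convex_fun {n : nat} (f : 'rV[R]_n -> R) : Prop :=
  forall (x y : 'rV[R]_n) (t : R), 0 <= t <= 1 ->
    f (t *: x + (1 - t) *: y) <= t * f x + (1 - t) * f y.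

Definition posdef_sym {n : nat} (A : 'M[R]_n) : Prop :=
  A^T = A /\ forall v : 'rV[R]_n, v != 0 -> 0 < qform A v.

(* D^2 f >= A in the sense of distributions: f - (1/2) p.Ap is convex *)
Definition hess_ge {n : nat} (f : 'rV[R]_n -> R) (A : 'M[R]_n) : Prop :=
  convex_fun (fun p => f p - qform A p / 2).

(* D^2 f <= A in the sense of distributions: (1/2) p.Ap - f is convex *)
Definition hess_le {n : nat} (f : 'rV[R]_n -> R) (A : 'M[R]_n) : Prop :=
  convex_fun (fun p => qform A p / 2 - f p).

Definition Gsum {d m : nat} (H1 H2 : 'I_m -> 'rV[R]_d -> R) (p : 'rV[R]_d) : R :=
  \sum_(i < m) (H1 i p + H2 i p).

Definition Phi {d m : nat} (L : 'rV[R]_d -> R) (gamma : R)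
  (H1 H2 H : 'I_m -> 'rV[R]_d -> R) (x : 'rV[R]_d) (tau : 'rV[R]_m) : R :=
  sup [set y | exists p : 'rV[R]_d,
         y = dotv p x - L p - gamma * Gsum H1 H2 p + \sum_(i < m) tau 0 i * H i p].

Definition unit_rv {n : nat} (j : 'I_n) : 'rV[R]_n := delta_mx 0 j.

Definition gradx {d m : nat} (F : 'rV[R]_d -> 'rV[R]_m -> R)
  (x : 'rV[R]_d) (tau : 'rV[R]_m) : 'rV[R]_d :=
  \row_(j < d) derive (fun y => F y tau) x (unit_rv j).

Definition Omega {d m : nat} (gamma : R) : set ('rV[R]_d * 'rV[R]_m) :=
  [set z : 'rV[R]_d * 'rV[R]_m | forall i : 'I_m, - gamma < z.2 0 i < gamma].

(* C^{1,1}(O) (local version): f differentiable on O with a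
   derivative that is Lipschitz on a neighbourhood of each point of O
   (i.e. |Df(z)v - Df(w)v| <= C |z-w| |v|). *)
Definition C11 {V : normedModType R} (f : V -> R) (O : set V) : Prop :=
  (forall z, O z -> differentiable f z) /\
  forall z0, O z0 -> exists r : R, 0 < r /\ exists C : R,
    forall z w v : V, O z -> O w -> ball z0 r z -> ball z0 r w ->
      `|derive f z v - derive f w v| <= C * `|z - w| * `|v|.

End Defs.

(* Main.v *)
Require Import Defs.
From HB Require Import structures.
From mathcomp Require Import all_boot all_order all_algebra.
From mathcomp Require Import all_classical all_reals all_analysis.
From mathcomp Require Import ring lra.
Import Order.TTheory GRing.Theory Num.Theory.
Import numFieldNormedType.Exports.
Local Open Scope ring_scope.
Local Open Scope classical_set_scope.
Section Basic.
Context {R : realType}.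

Lemma rv_coord_le n (v : 'rV[R]_n) j : `|v 0 j| <= `|v|.
Proof.
rewrite [X in _ <= X]/Num.Def.normr /= mx_normrE.
exact: (le_bigmax _ (fun ij : 'I_1 * 'I_n => `|v ij.1 ij.2|) (0, j)).
Qed.

Lemma rv_norm_le n (v : 'rV[R]_n) M : 0 <= M -> (forall j, `|v 0 j| <= M) -> `|v| <= M.
Proof.
move=> M0 H; rewrite [X in X <= _]/Num.Def.normr /= mx_normrE.
apply: bigmax_le => // -[i j] _ /=; rewrite (ord1 i); exact: H.
Qed.

Lemma rv_norm_attained n (v : 'rV[R]_n) : `|v| = 0 \/ exists j, `|v| = `|v 0 j|.
Proof.
have [->|h] := eqVneq `|v| 0; first by left.
right; have [[i j] hj] := mx_norm_neq0 h.
by exists j; rewrite /Num.Def.normr /= hj /= (ord1 i).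
Qed.

Lemma dotvC n (u v : 'rV[R]_n) : dotv u v = dotv v u.
Proof. by apply: eq_bigr => j _; rewrite mulrC. Qed.

Lemma dotvDl n (u v w : 'rV[R]_n) : dotv (u + v) w = dotv u w + dotv v w.
Proof. by rewrite /dotv -big_split; apply: eq_bigr => j _; rewrite mxE mulrDl. Qed.

Lemma dotvZl n a (u w : 'rV[R]_n) : dotv (a *: u) w = a * dotv u w.
Proof. by rewrite /dotv mulr_sumr; apply: eq_bigr => j _; rewrite mxE mulrA. Qed.

Lemma dotvNl n (u w : 'rV[R]_n) : dotv (- u) w = - dotv u w.
Proof. by rewrite -scaleN1r dotvZl mulN1r. Qed.

Lemma dotvBl n (u v w : 'rV[R]_n) : dotv (u - v) w = dotv u w - dotv v w.
Proof. by rewrite dotvDl dotvNl. Qed.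

Lemma dotvDr n (u v w : 'rV[R]_n) : dotv w (u + v) = dotv w u + dotv w v.
Proof. by rewrite !(dotvC _ w) dotvDl. Qed.

Lemma dotvZr n a (u w : 'rV[R]_n) : dotv w (a *: u) = a * dotv w u.
Proof. by rewrite !(dotvC _ w) dotvZl. Qed.

Lemma dotvBr n (u v w : 'rV[R]_n) : dotv w (u - v) = dotv w u - dotv w v.
Proof. by rewrite !(dotvC _ w) dotvBl. Qed.

Lemma dotv0l n (w : 'rV[R]_n) : dotv 0 w = 0.
Proof. by rewrite /dotv big1 // => j _; rewrite mxE mul0r. Qed.

Lemma dotv0r n (w : 'rV[R]_n) : dotv w 0 = 0.
Proof. by rewrite dotvC dotv0l. Qed.

Lemma dotv_mulmx n (u v : 'rV[R]_n) (M : 'M[R]_n) :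
  dotv (u *m M) v = dotv u (v *m M^T).
Proof.
rewrite /dotv.
under eq_bigr do rewrite mxE big_distrl /=.
under [RHS]eq_bigr do rewrite mxE big_distrr /=.
rewrite exchange_big /=; apply: eq_bigr => i _; apply: eq_bigr => j _.
by rewrite mxE; ring.
Qed.

Lemma dotv_unit n (p : 'rV[R]_n) j : dotv p (unit_rv j) = p 0 j.
Proof.
rewrite /dotv (bigD1 j) //= big1 => [|k kj]; rewrite /unit_rv mxE.
  by rewrite !eqxx /= mulr1 addr0.
by rewrite (negbTE kj) andbF mulr0.
Qed.

Lemma dotv_norm n (u v : 'rV[R]_n) : `|dotv u v| <= n%:R * `|u| * `|v|.
Proof.
rewrite /dotv (le_trans (ler_norm_sum _ _ _)) //.
have -> : n%:R * `|u| * `|v| = \sum_(j < n) (`|u| * `|v|).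
  by rewrite sumr_const card_ord -mulrA mulr_natl.
apply: ler_sum => j _; rewrite normrM.
by apply: ler_pM => //; apply: rv_coord_le.
Qed.

End Basic.
Section Convex.
Context {R : realType} {n : nat}.
Implicit Types (f : 'rV[R]_n -> R).

Lemma cvx f (hf : convex_fun f) (x y : 'rV[R]_n) t : 0 <= t -> t <= 1 ->
  f (t *: x + (1 - t) *: y) <= t * f x + (1 - t) * f y.
Proof. by move=> t0 t1; apply: hf; rewrite t0 t1. Qed.

Lemma jensen_sub f (hf : convex_fun f) k (w : 'I_k -> R) (v : 'I_k -> 'rV[R]_n)
  (b : 'rV[R]_n) : (forall i, 0 <= w i) -> \sum_i w i <= 1 ->
  f (b + \sum_i w i *: (v i - b)) <= (1 - \sum_i w i) * f b + \sum_i w i * f (v i).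
Proof.
elim: k w v => [|k IH] w v w0 ws.
  by rewrite !big_ord0 addr0 subr0 mul1r addr0.
move: ws; rewrite !big_ord_recr /=.
set t := w ord_max; set s := \sum_(i < k) w (widen_ord _ i) => ws.
have t0 : 0 <= t by apply: w0.
have s0 : 0 <= s by apply: sumr_ge0 => i _; apply: w0.
have [t1|t1] := eqVneq t 1.
  have s00 : s = 0 by apply/eqP; rewrite eq_le s0 andbT; move: ws; rewrite t1; lra.
  have wi0 i : w (widen_ord (leqnSn k) i) = 0.
    by apply: (psumr_eq0P (P := xpredT) _ s00) => // j _; apply: w0.
  rewrite big1 => [|i _]; last by rewrite wi0 scale0r.
  rewrite big1 => [|i _]; last by rewrite wi0 mul0r.
  rewrite -/s s00 t1 scale1r add0r [b + _]addrC subrK; lra.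
have tl1 : t < 1 by rewrite lt_neqAle t1 /=; move: ws; lra.
set u := 1 - t.
have u0 : 0 < u by rewrite /u; lra.
pose w' i := w (widen_ord (leqnSn k) i) / u.
have w'0 i : 0 <= w' i by rewrite /w' divr_ge0 // ?w0 // ltW.
have sw' : \sum_i w' i = s / u by rewrite /w' -mulr_suml.
have ws' : \sum_i w' i <= 1 by rewrite sw' ler_pdivrMr // mul1r /u; move: ws; lra.
have := IH w' (fun i => v (widen_ord (leqnSn k) i)) w'0 ws'.
set X := \sum_i w' i *: _; move=> hIH.
have eS : \sum_(i < k) w (widen_ord (leqnSn k) i) *: (v (widen_ord (leqnSn k) i) - b)
    = u *: X.
  rewrite /X scaler_sumr; apply: eq_bigr => i _; rewrite scalerA /w'.
  by rewrite mulrC divfK // gt_eqF.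
rewrite eS.
have -> : b + (u *: X + t *: (v ord_max - b)) = t *: v ord_max + (1 - t) *: (b + X).
  by rewrite /u; apply/rowP => j; rewrite !mxE; ring.
have hc := cvx f hf (v ord_max) (b + X) t t0 (ltW tl1).
apply: le_trans hc _.
have eT : \sum_(i < k) w (widen_ord (leqnSn k) i) * f (v (widen_ord (leqnSn k) i))
    = u * \sum_i w' i * f (v (widen_ord (leqnSn k) i)).
  rewrite mulr_sumr; apply: eq_bigr => i _; rewrite /w' mulrA.
  by rewrite [u * _]mulrC divfK // gt_eqF.
rewrite eT -/u.
have : u * f (b + X) <= u * ((1 - \sum_i w' i) * f b + \sum_i w' i * f (v (widen_ord (leqnSn k) i))).
  by rewrite ler_pM2l.
rewrite sw'.
set Y := \sum_i w' i * _.
have -> : u * ((1 - s / u) * f b + Y) = (u - s) * f b + u * Y.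
  by field; rewrite gt_eqF.
rewrite /u; lra.
Qed.

Lemma cvx_ub f (hf : convex_fun f) rho : 0 <= rho ->
  exists M, forall q, `|q| <= rho -> f q <= M.
Proof.
move=> r0.
set c := n%:R * rho + 1.
have nr0 : 0 <= n%:R * rho by apply: mulr_ge0.
have c0 : 0 < c by rewrite /c; lra.
pose M := `|f 0| + \sum_(j < n) (`|f (c *: unit_rv j)| + `|f ((- c) *: unit_rv j)|).
exists M => q hq.
pose w j := `|q 0 j| / c.
pose v j := (if 0 <= q 0 j then c else - c) *: (unit_rv j : 'rV[R]_n).
have w0 j : 0 <= w j by rewrite /w divr_ge0 // ltW.
have sw : \sum_j w j <= 1.
  rewrite /w -mulr_suml ler_pdivrMr // mul1r.
  apply: (@le_trans _ _ (\sum_(j < n) rho)).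
    by apply: ler_sum => j _; apply: le_trans (rv_coord_le _ q j) hq.
  rewrite sumr_const card_ord -mulr_natl /c; lra.
have eq : q = 0 + \sum_j w j *: (v j - 0).
  rewrite add0r; under eq_bigr do rewrite subr0.
  rewrite {1}(row_sum_delta q); apply: eq_bigr => j _; rewrite /v /w scalerA.
  congr (_ *: _); case: ifP => h.
    by rewrite ger0_norm // divfK // gt_eqF.
  by rewrite ltr0_norm ?ltNge ?h //; field; rewrite gt_eqF.
have := jensen_sub f hf _ w v 0 w0 sw; rewrite -eq => H; apply: le_trans H _.
have fb : f 0 <= M.
  rewrite /M; apply: le_trans (ler_norm _) _; rewrite lerDl.
  by apply: sumr_ge0 => j _; apply: addr_ge0.
have fv j : f (v j) <= M.
  have h1 : `|f (c *: unit_rv j)| + `|f ((- c) *: unit_rv j)| <= M - `|f 0|.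
    rewrite [M - _]addrC /M addKr (bigD1 j) //= lerDl.
    by apply: sumr_ge0 => i _; apply: addr_ge0.
  have := normr_ge0 (f 0); have := ler_norm (f (c *: unit_rv j)).
  have := ler_norm (f ((- c) *: unit_rv j)); have := normr_ge0 (f (c *: unit_rv j)).
  have := normr_ge0 (f ((- c) *: unit_rv j)).
  rewrite /v; case: ifP => _; lra.
apply: le_trans (lerD (ler_wpM2l _ fb) (ler_sum _ (fun j _ => ler_wpM2l (w0 j) (fv j)))) _.
  by rewrite subr_ge0.
have -> : \sum_(i < n) w i * M = (\sum_i w i) * M by rewrite mulr_suml.
lra.
Qed.

Lemma cvx_lip f (hf : convex_fun f) rho : 0 <= rho ->
  exists C, 0 <= C /\ forall x y, `|x| <= rho -> `|y| <= rho ->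
    `|f x - f y| <= C * `|x - y|.
Proof.
move=> r0; have [M hM] := cvx_ub f hf (rho + 1) (ltac:(lra)).
have f0M : f 0 <= M by apply: hM; rewrite normr0; lra.
have lb q : `|q| <= rho + 1 -> 2 * f 0 - M <= f q.
  move=> hq.
  have h12 : (0:R) <= 1/2 by lra.
  have h12' : (1/2:R) <= 1 by lra.
  have := cvx f hf q (- q) (1/2) h12 h12'.
  have -> : (1/2) *: q + (1 - 1/2) *: (- q) = 0.
    by apply/rowP => j; rewrite !mxE; field.
  have := hM (- q); rewrite normrN => /(_ hq); lra.
exists (2 * M - 2 * f 0); split; first lra.
have H x y : `|x| <= rho -> `|y| <= rho -> f y - f x <= (2 * M - 2 * f 0) * `|y - x|.
  move=> hx hy.
  have [->|nxy] := eqVneq y x; first by rewrite !subrr normr0 mulr0.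
  set dl := `|y - x|.
  have dl0 : 0 < dl by rewrite normr_gt0 subr_eq0.
  set z := y + dl^-1 *: (y - x).
  have hz : `|z| <= rho + 1.
    apply: le_trans (ler_normD _ _) _; rewrite normrZ ger0_norm; last first.
      by rewrite invr_ge0 ltW.
    by rewrite mulVf ?gt_eqF //; lra.
  set lam := (1 + dl)^-1.
  have l0 : 0 < lam by rewrite invr_gt0; lra.
  have lamE : lam * (1 + dl) = 1 by rewrite mulVf // gt_eqF //; lra.
  have ey : y = lam *: x + (1 - lam) *: z.
    apply/rowP => j; rewrite !mxE /lam; field.
    by rewrite !gt_eqF //; lra.
  have l1 : lam <= 1.
    by rewrite -lamE ler_peMr ?ltW //; lra.
  have hc := cvx f hf x z lam (ltW l0) l1; rewrite -ey in hc.
  have lx := lb x (ltac:(lra)); have uz := hM z hz.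
  have e1 : 1 - lam = dl * lam by rewrite -[X in X - _]lamE; ring.
  have h2 : (1 - lam) * (f z - f x) <= (1 - lam) * (2 * M - 2 * f 0).
    by apply: ler_wpM2l; lra.
  have h3 : (1 - lam) * (2 * M - 2 * f 0) <= dl * (2 * M - 2 * f 0).
    apply: ler_wpM2r; first lra.
    rewrite e1 ger_pMr //.
  have e2 : lam * f x + (1 - lam) * f z - f x = (1 - lam) * (f z - f x) by ring.
  rewrite mulrC; lra.
move=> x y hx hy; rewrite ler_norml; apply/andP; split.
  by rewrite distrC; have := H x y hx hy; lra.
by apply: H.
Qed.

Lemma cvx_linlb f (hf : convex_fun f) :
  exists b, 0 <= b /\ forall p, f 0 - b * `|p| <= f p.
Proof.
have [M hM] := cvx_ub f hf 1 ler01.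
have f0M : f 0 <= M by apply: hM; rewrite normr0.
exists (M - f 0); split; first lra.
move=> p; have [->|p0] := eqVneq p 0; first by rewrite normr0 mulr0 subr0.
set s := `|p|.
have s0 : 0 < s by rewrite normr_gt0.
set q := (- s^-1) *: p.
have hq : `|q| <= 1.
  rewrite normrZ normrN ger0_norm; last by rewrite invr_ge0 ltW.
  by rewrite mulVf // gt_eqF.
set lam := (1 + s)^-1.
have l0 : 0 < lam by rewrite invr_gt0; lra.
have lamE : lam * (1 + s) = 1 by rewrite mulVf // gt_eqF //; lra.
have l1 : lam <= 1 by rewrite -lamE ler_peMr ?ltW //; lra.
have e0 : 0 = lam *: p + (1 - lam) *: q.
  apply/rowP => j; rewrite !mxE /lam; field.
  by rewrite !gt_eqF //; lra.
have hc := cvx f hf p q lam (ltW l0) l1; rewrite -e0 in hc.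
have h1 : (1 - lam) * f q <= (1 - lam) * M by apply: ler_wpM2l; [lra | apply: hM].
have h : (1 + s) * f 0 <= (1 + s) * (lam * f p + (1 - lam) * M).
  by apply: ler_wpM2l; lra.
have e : (1 + s) * (lam * f p + (1 - lam) * M) = f p + s * M.
  by rewrite /lam; field; rewrite gt_eqF //; lra.
rewrite mulrC; lra.
Qed.

End Convex.
Section Analysis.
Context {R : realType} {V : normedModType R}.

Lemma lip_cont (g : V -> R) :
  (forall x, exists r C, 0 < r /\ 0 <= C /\ forall y, `|y - x| < r -> `|g y - g x| <= C * `|y - x|) ->
  continuous g.
Proof.
move=> H x; apply/cvgrPdist_le => e e0.
have [r [C [r0 [C0 HC]]]] := H x.
apply/nbhs_normP; exists (Num.min r (e / (C + 1))) => /=.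
  rewrite lt_min r0 /=; apply: divr_gt0 => //; lra.
move=> y /=; rewrite lt_min => /andP[h1 h2].
rewrite distrC in h1 h2; rewrite distrC.
apply: le_trans (HC y h1) _.
have h3 : C * `|y - x| <= C * (e / (C + 1)) by apply: ler_wpM2l => //; apply: ltW.
have h4 : C * (e / (C + 1)) <= e.
  rewrite mulrA ler_pdivrMr; last lra.
  rewrite mulrC ler_pM2l //; lra.
lra.
Qed.
Lemma small_mul (K e a : R) : 0 <= K -> 0 < e -> 0 <= a -> a <= e / (K + 1) -> K * a <= e.
Proof.
move=> K0 e0 a0 ha.
have h3 : K * a <= K * (e / (K + 1)) by apply: ler_wpM2l.
have h4 : K * (e / (K + 1)) <= e.
  rewrite mulrA ler_pdivrMr; last lra.
  rewrite mulrC ler_pM2l //; lra.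
lra.
Qed.

Lemma quad_o (f : V -> R) (x : V) (g : V -> R) r K :
  0 < r -> 0 <= K ->
  (forall h, `|h| < r -> `|f (h + x) - f x - g h| <= K * `|h| ^+ 2) ->
  f \o shift x = cst (f x) + g +o_ 0 id.
Proof.
move=> r0 K0 H; apply/eqaddoP => e e0.
apply/nbhs_normP; exists (Num.min r (e / (K + 1))) => /=.
  rewrite lt_min r0 /=; apply: divr_gt0 => //; lra.
move=> h /=; rewrite lt_min sub0r normrN => /andP[h1 h2].
rewrite !fctE /=.
have -> : f (h + x) - (f x + g h) = f (h + x) - f x - g h by rewrite opprD addrA.
apply: le_trans (H h h1) _.
rewrite expr2 mulrA.
apply: ler_wpM2r => //.
by apply: small_mul => //; apply: ltW.
Qed.

Lemma diff_from (f : V -> R) (x : V) (g : {linear V -> R}) :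
  continuous g -> f \o shift x = cst (f x) + g +o_ 0 id -> differentiable f x.
Proof.
move=> gc H; apply/diff_locallyP; rewrite (diff_unique gc H); split => //.
Qed.

Lemma quad_derive (f : V -> R) (x v : V) (g : V -> R) r K :
  0 < r -> 0 <= K -> (forall t u, g (t *: u) = t * g u) ->
  (forall h, `|h| < r -> `|f (h + x) - f x - g h| <= K * `|h| ^+ 2) ->
  derive f x v = g v.
Proof.
move=> r0 K0 gZ H; apply: cvg_lim => //.
apply/cvgrPdist_le => e e0.
rewrite near_withinE; apply/nbhs_normP.
set c := K * (`|v| + 1) ^+ 2.
have c0 : 0 <= c by apply: mulr_ge0 => //; apply: sqr_ge0.
have v1 : 0 < `|v| + 1 by have := normr_ge0 v; lra.
exists (Num.min (r / (`|v| + 1)) (e / (c + 1))) => /=.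
  rewrite lt_min; apply/andP; split; apply: divr_gt0 => //; lra.
move=> t /=; rewrite lt_min sub0r normrN => /andP[h1 h2] t0.
have tp : 0 < `|t| by rewrite normr_gt0.
have ht : `|t *: v| < r.
  rewrite normrZ; rewrite ltr_pdivlMr // in h1.
  apply: le_lt_trans h1; apply: ler_wpM2l; [exact: ltW | lra].
have Hq := H _ ht; rewrite gZ in Hq.
have -> : g v - t^-1 *: (f (t *: v + x) - f x) = - (t^-1 * (f (t *: v + x) - f x - t * g v)).
  by rewrite [in RHS]mulrBr mulrA mulVf // mul1r opprB.
rewrite normrN normrM normfV ler_pdivrMl //.
apply: le_trans Hq _.
rewrite normrZ exprMn.
have h5 : K * (`|t| ^+ 2 * `|v| ^+ 2) = `|t| * (K * `|v| ^+ 2 * `|t|) by ring.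
rewrite h5 ler_pM2l //.
have hv : `|v| ^+ 2 <= (`|v| + 1) ^+ 2.
  rewrite !expr2; apply: ler_pM; try lra; exact: normr_ge0.
have h3 : K * `|v| ^+ 2 <= c by apply: ler_wpM2l.
have h4 : c * `|t| <= e by apply: small_mul => //; apply: ltW.
apply: le_trans h4; apply: ler_wpM2r => //; exact: ltW.
Qed.



End Analysis.
Section Quad.
Context {R : realType} {n : nat}.

Lemma qf_sym (M : 'M[R]_n) (u v : 'rV[R]_n) : M^T = M ->
  dotv (u *m M) v = dotv (v *m M) u.
Proof. by move=> hM; rewrite dotv_mulmx hM dotvC. Qed.

Lemma qform0 (M : 'M[R]_n) : qform M 0 = 0.
Proof. by rewrite /qform mul0mx dotv0l. Qed.

Lemma qformZ (M : 'M[R]_n) s (v : 'rV[R]_n) : qform M (s *: v) = s ^+ 2 * qform M v.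
Proof. by rewrite /qform -scalemxAl dotvZl dotvZr mulrA expr2. Qed.

Lemma dotvNr (u w : 'rV[R]_n) : dotv w (- u) = - dotv w u.
Proof. by rewrite dotvC dotvNl dotvC. Qed.

Lemma qform_comb (M : 'M[R]_n) (a b : 'rV[R]_n) t : M^T = M ->
  qform M (t *: a + (1 - t) *: b) =
  t * qform M a + (1 - t) * qform M b - t * (1 - t) * qform M (a - b).
Proof.
move=> hM; rewrite /qform !mulmxDl ?mulNmx -!scalemxAl.
rewrite !dotvDl ?dotvNl !dotvZl !dotvDr ?dotvNr !dotvZr.
rewrite (qf_sym M b a hM); ring.
Qed.

Lemma rv_mulmx_norm (M : 'M[R]_n) : exists S, 0 <= S /\ forall u : 'rV[R]_n, `|u *m M| <= S * `|u|.
Proof.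
exists (\sum_k \sum_j `|M k j|); split.
  by apply: sumr_ge0 => k _; apply: sumr_ge0 => j _.
move=> u; apply: rv_norm_le.
  by apply: mulr_ge0; [apply: sumr_ge0 => k _; apply: sumr_ge0 | ].
move=> j; rewrite mxE; apply: le_trans (ler_norm_sum _ _ _) _.
rewrite mulr_suml; apply: ler_sum => k _; rewrite normrM mulrC.
apply: ler_pM => //; last exact: rv_coord_le.
by rewrite (bigD1 j) //= lerDl; apply: sumr_ge0.
Qed.

Lemma bil_bound (M : 'M[R]_n) : exists C, 0 <= C /\
  forall u v : 'rV[R]_n, `|dotv (u *m M) v| <= C * `|u| * `|v|.
Proof.
have [S [S0 HS]] := rv_mulmx_norm M.
exists (n%:R * S); split; first by apply: mulr_ge0.
move=> u v; apply: le_trans (dotv_norm _ _ _) _.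
rewrite -!mulrA; apply: ler_wpM2l => //; rewrite mulrA; apply: ler_wpM2r => //; exact: HS.
Qed.

Variable A : 'M[R]_n.
Hypothesis hA : posdef_sym A.

Lemma unitA : A \in unitmx.
Proof.
rewrite unitmxE unitfE; apply/negP => /det0P [v v0 vA].
by have := (proj2 hA) v v0; rewrite /qform vA dotv0l ltxx.
Qed.

Lemma symA : A^T = A. Proof. exact: (proj1 hA). Qed.

Lemma symA' : (invmx A)^T = invmx A.
Proof. by rewrite trmx_inv symA. Qed.

Lemma posQ v : 0 <= qform A v.
Proof.
have [->|v0] := eqVneq v 0; first by rewrite qform0.
exact: ltW ((proj2 hA) v v0).
Qed.

Lemma ineqQ (q w : 'rV[R]_n) :
  dotv q w <= qform A q / 2 + qform (invmx A) w / 2.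
Proof.
have := posQ (q - w *m invmx A).
rewrite /qform mulmxBl mulmxKV; last exact: unitA.
rewrite !dotvBl !dotvBr.
have -> : dotv (q *m A) (w *m invmx A) = dotv q w.
  by rewrite dotv_mulmx symA mulmxKV //; exact: unitA.
rewrite (dotvC _ w q) (dotvC _ w (w *m _)).
lra.
Qed.

Lemma Qlow : exists c, 0 < c /\ forall v : 'rV[R]_n, `|v| ^+ 2 <= c * qform A v.
Proof.
pose cj (j : 'I_n) := qform (invmx A) (unit_rv j).
set c := 1 + \sum_j `|cj j|.
have c0 : 0 < c.
  rewrite /c; have : 0 <= \sum_j `|cj j| by apply: sumr_ge0.
  lra.
exists c; split => // v.
have Hj j : v 0 j ^+ 2 <= c * qform A v.
  set a := v 0 j.
  have := ineqQ v ((a / c) *: unit_rv j).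
  rewrite dotvZr dotv_unit qformZ -/(cj j).
  have hcj : cj j <= c.
    rewrite /c; apply: le_trans (ler_norm _) _.
    rewrite (bigD1 j) //=.
    have : 0 <= \sum_(i < n | i != j) `|cj i| by apply: sumr_ge0.
    lra.
  have ha : 0 <= (a / c) ^+ 2 by apply: sqr_ge0.
  have h1 : (a / c) ^+ 2 * cj j <= (a / c) ^+ 2 * c by apply: ler_wpM2l.
  have e1 : (a / c) ^+ 2 * c = a * (a / c).
    by rewrite expr2; field; rewrite gt_eqF.
  have hQ := posQ v.
  move=> h2; change (v 0 j) with a in h2.
  have h3 : a * (a / c) <= qform A v.
    lra.
  have e2 : a * (a / c) * c = a ^+ 2 by rewrite expr2; field; rewrite gt_eqF.
  rewrite -e2 mulrC; apply: ler_wpM2l; [exact: ltW | exact: h3].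
have [->|[j ->]] := rv_norm_attained _ v.
  rewrite expr0n /=; apply: mulr_ge0; [exact: ltW | exact: posQ].
by rewrite real_normK ?num_real //; exact: Hj.
Qed.

End Quad.
Section Lipschitz.
Context {R : realType} {n : nat}.

Definition lipB (f : 'rV[R]_n -> R) := forall rho, 0 <= rho -> exists C, 0 <= C /\
  forall x y, `|x| <= rho -> `|y| <= rho -> `|f x - f y| <= C * `|x - y|.

Lemma lipB_ext f g : (forall p, f p = g p) -> lipB g -> lipB f.
Proof.
move=> e hg rho r0; have [C [C0 HC]] := hg rho r0; exists C; split => // x y hx hy.
by rewrite !e; apply: HC.
Qed.

Lemma lipB_add f g : lipB f -> lipB g -> lipB (fun p => f p + g p).
Proof.
move=> hf hg rho r0; have [C [C0 HC]] := hf rho r0; have [D [D0 HD]] := hg rho r0.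
exists (C + D); split; first exact: addr_ge0.
move=> x y hx hy; have := HC x y hx hy; have := HD x y hx hy.
have e : f x + g x - (f y + g y) = (f x - f y) + (g x - g y) by ring.
rewrite e; move=> h1 h2; apply: le_trans (ler_normD _ _) _; rewrite mulrDl; lra.
Qed.

Lemma lipB_scale c f : lipB f -> lipB (fun p => c * f p).
Proof.
move=> hf rho r0; have [C [C0 HC]] := hf rho r0.
exists (`|c| * C); split; first exact: mulr_ge0.
move=> x y hx hy; rewrite -mulrBr normrM -mulrA; apply: ler_wpM2l => //; exact: HC.
Qed.

Lemma lipB_sum k (F : 'I_k -> 'rV[R]_n -> R) : (forall i, lipB (F i)) ->
  lipB (fun p => \sum_(i < k) F i p).
Proof.
elim: k F => [|k IH] F hF.
  apply: (@lipB_ext _ (fun _ => 0)) => [p|]; first by rewrite big_ord0.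
  move=> rho r0; exists 0; split => // x y _ _; rewrite subrr normr0 mul0r.
  by [].
apply: (@lipB_ext _ (fun p => \sum_(i < k) F (widen_ord (leqnSn k) i) p + F ord_max p)).
  by move=> p; rewrite big_ord_recr.
apply: lipB_add; last exact: hF.
by apply: IH => i; apply: hF.
Qed.

Lemma lipB_cvx f : convex_fun f -> lipB f.
Proof. by move=> hf rho r0; apply: cvx_lip. Qed.

Lemma lipB_dot (x : 'rV[R]_n) : lipB (fun p => dotv p x).
Proof.
move=> rho r0; exists (n%:R * `|x|); split; first by apply: mulr_ge0.
move=> p q _ _; rewrite -dotvBl; apply: le_trans (dotv_norm _ _ _) _.
by rewrite -mulrA [`|p - q| * _]mulrC mulrA.
Qed.

Lemma lipB_qform (M : 'M[R]_n) : M^T = M -> lipB (qform M).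
Proof.
move=> hM rho r0; have [C [C0 HC]] := bil_bound M.
exists (C * (2 * rho)); split; first by apply: mulr_ge0 => //; lra.
move=> p q hp hq.
have e : qform M p - qform M q = dotv ((p - q) *m M) (p + q).
  rewrite /qform mulmxBl dotvBl !dotvDr (qf_sym M q p hM); ring.
rewrite e; apply: le_trans (HC _ _) _.
have hpq : `|p + q| <= 2 * rho by apply: le_trans (ler_normD _ _) _; lra.
have e2 : C * `|p - q| * `|p + q| = C * `|p + q| * `|p - q| by ring.
rewrite e2; apply: ler_wpM2r => //.
by apply: ler_wpM2l.
Qed.

Lemma lipB_cont f : lipB f -> continuous f.
Proof.
move=> hf; apply: lip_cont => x.
have [C [C0 HC]] := hf (`|x| + 1) (ltac:(have := normr_ge0 x; lra)).
exists 1, C; split => //; split => // y hy; apply: HC.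
  have := ler_normD (y - x) x; rewrite subrK; lra.
have := normr_ge0 x; lra.
Qed.

Lemma lipB_family k (F : 'I_k -> 'rV[R]_n -> R) : (forall i, lipB (F i)) ->
  forall rho, 0 <= rho -> exists C, 0 <= C /\ forall i x y, `|x| <= rho -> `|y| <= rho ->
    `|F i x - F i y| <= C * `|x - y|.
Proof.
move=> hF rho r0.
have [c hc] := choice (fun i => hF i rho r0).
exists (\sum_i c i); split; first by apply: sumr_ge0 => i _; case: (hc i).
move=> i x y hx hy; have [c0 Hc] := hc i; apply: le_trans (Hc x y hx hy) _.
apply: ler_wpM2r => //; rewrite (bigD1 i) //= lerDl; apply: sumr_ge0 => j _.
by case: (hc j).
Qed.

End Lipschitz.
Section Main.
Context {R : realType} {d m : nat}
  (H1 H2 H : 'I_m -> 'rV[R]_d -> R)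
  (hH1 : forall i, convex_fun (H1 i)) (hH2 : forall i, convex_fun (H2 i))
  (hH : forall i p, H i p = H1 i p - H2 i p)
  (gamma : R) (hgamma : 0 < gamma)
  (A : 'M[R]_d) (hA : posdef_sym A)
  (L : 'rV[R]_d -> R) (hL : hess_ge L A).

Definition Q p := qform A p.
Definition ell p x (tau : 'rV[R]_m) :=
  dotv p x - L p - gamma * Gsum H1 H2 p + \sum_(i < m) tau 0 i * H i p.
Definition Kf (tau : 'rV[R]_m) p := L p + gamma * Gsum H1 H2 p - \sum_(i < m) tau 0 i * H i p.
Definition Oc (tau : 'rV[R]_m) := forall i, `|tau 0 i| <= gamma.
Definition L0 p := L p - Q p / 2.
Definition K0 (tau : 'rV[R]_m) p := L0 p + \sum_(i < m) ((gamma - tau 0 i) * H1 i p + (gamma + tau 0 i) * H2 i p).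

Lemma ellK p x tau : ell p x tau = dotv p x - Kf tau p.
Proof. by rewrite /ell /Kf; ring. Qed.

Lemma KfE tau p : Kf tau p = K0 tau p + Q p / 2.
Proof.
rewrite /Kf /K0 /L0 /Gsum mulr_sumr.
have e : \sum_(i < m) gamma * (H1 i p + H2 i p) - \sum_(i < m) tau 0 i * H i p =
  \sum_(i < m) ((gamma - tau 0 i) * H1 i p + (gamma + tau 0 i) * H2 i p).
  rewrite -sumrB; apply: eq_bigr => i _; rewrite hH; ring.
lra.
Qed.

Lemma cvx_ext (f g : 'rV[R]_d -> R) : (forall p, f p = g p) -> convex_fun g -> convex_fun f.
Proof. by move=> e hg x y t ht; rewrite !e; apply: hg. Qed.

Lemma cvx_add (f g : 'rV[R]_d -> R) : convex_fun f -> convex_fun g -> convex_fun (fun p => f p + g p).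
Proof.
move=> hf hg x y t ht; have := hf x y t ht; have := hg x y t ht; lra.
Qed.

Lemma cvx_scale c (f : 'rV[R]_d -> R) : 0 <= c -> convex_fun f -> convex_fun (fun p => c * f p).
Proof.
move=> c0 hf x y t ht; have := hf x y t ht => h.
have := ler_wpM2l c0 h; lra.
Qed.

Lemma cvx_sum k (F : 'I_k -> 'rV[R]_d -> R) : (forall i, convex_fun (F i)) ->
  convex_fun (fun p => \sum_(i < k) F i p).
Proof.
move=> hF x y t ht.
apply: le_trans (ler_sum _ (fun i _ => hF i x y t ht)) _.
by rewrite big_split /= -!mulr_sumr.
Qed.

Lemma K0_cvx tau : Oc tau -> convex_fun (K0 tau).
Proof.
move=> ht; apply: cvx_add; first exact: hL.
apply: cvx_sum => i; apply: cvx_add; apply: cvx_scale => //;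
  have := ht i; rewrite ler_norml => /andP[]; lra.
Qed.

Lemma symA_ : A^T = A. Proof. exact: (proj1 hA). Qed.

Lemma Kf_strong tau (a b : 'rV[R]_d) t : Oc tau -> 0 <= t -> t <= 1 ->
  Kf tau (t *: a + (1 - t) *: b) <=
  t * Kf tau a + (1 - t) * Kf tau b - t * (1 - t) / 2 * Q (a - b).
Proof.
move=> ht t0 t1; rewrite !KfE /Q (qform_comb A a b t symA_).
have := cvx (K0 tau) (K0_cvx tau ht) a b t t0 t1; lra.
Qed.

Lemma term_lb (g c y v b s : R) : 0 <= c -> c <= 2 * g -> 0 <= b -> 0 <= s ->
  y - b * s <= v -> - (2 * g * `|y|) - 2 * g * b * s <= c * v.
Proof.
move=> c0 c1 b0 s0 hv.
have h1 : c * (y - b * s) <= c * v by apply: ler_wpM2l.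
have h2 : c * (- y) <= c * `|y| by apply: ler_wpM2l => //; rewrite -normrN ler_norm.
have h3 : c * `|y| <= 2 * g * `|y| by apply: ler_wpM2r.
have h4 : c * (b * s) <= 2 * g * (b * s) by apply: ler_wpM2r => //; apply: mulr_ge0.
lra.
Qed.

Lemma term_ub (g c y : R) : 0 <= c -> c <= 2 * g -> c * y <= 2 * g * `|y|.
Proof.
move=> c0 c1.
have h2 : c * y <= c * `|y| by apply: ler_wpM2l => //; rewrite ler_norm.
have h3 : c * `|y| <= 2 * g * `|y| by apply: ler_wpM2r.
lra.
Qed.

Lemma K0_bounds : exists a0 b, 0 <= a0 /\ 0 <= b /\
  forall tau, Oc tau -> (K0 tau 0 <= a0) /\ forall p, - a0 - b * `|p| <= K0 tau p.
Proof.
have [b0 [b00 hb0]] := cvx_linlb L0 hL.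
have [b1 hb1] := choice (fun i => cvx_linlb (H1 i) (hH1 i)).
have [b2 hb2] := choice (fun i => cvx_linlb (H2 i) (hH2 i)).
set a0 := `|L0 0| + \sum_(i < m) (2 * gamma * `|H1 i 0| + 2 * gamma * `|H2 i 0|).
set b := b0 + \sum_(i < m) (2 * gamma * b1 i + 2 * gamma * b2 i).
have g2 : 0 <= 2 * gamma by apply: mulr_ge0 => //; apply: ltW.
have sa : 0 <= \sum_(i < m) (2 * gamma * `|H1 i 0| + 2 * gamma * `|H2 i 0|).
  by apply: sumr_ge0 => i _; apply: addr_ge0; apply: mulr_ge0.
have sb : 0 <= \sum_(i < m) (2 * gamma * b1 i + 2 * gamma * b2 i).
  apply: sumr_ge0 => i _; apply: addr_ge0; apply: mulr_ge0 => //.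
    by case: (hb1 i).
  by case: (hb2 i).
exists a0, b; split; first by rewrite /a0; have := normr_ge0 (L0 0); lra.
split; first by rewrite /b; lra.
move=> tau ht; split.
  rewrite /K0 /a0; apply: lerD; first exact: ler_norm.
  apply: ler_sum => i _.
  have := ht i; rewrite ler_norml => /andP[ti1 ti2].
  by apply: lerD; apply: term_ub; lra.
move=> p.
have np := normr_ge0 p.
rewrite /K0 /a0 /b.
have hL0 := hb0 p.
have hs : - (\sum_(i < m) (2 * gamma * `|H1 i 0| + 2 * gamma * `|H2 i 0|)) -
    (\sum_(i < m) (2 * gamma * b1 i + 2 * gamma * b2 i)) * `|p| <=
    \sum_(i < m) ((gamma - tau 0 i) * H1 i p + (gamma + tau 0 i) * H2 i p).
  rewrite mulr_suml -sumrN -sumrB; apply: ler_sum => i _.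
  have := ht i; rewrite ler_norml => /andP[ti1 ti2].
  have [b10 hb1i] := hb1 i; have [b20 hb2i] := hb2 i.
  have c1 : 0 <= gamma - tau 0 i by lra.
  have c1' : gamma - tau 0 i <= 2 * gamma by lra.
  have c2 : 0 <= gamma + tau 0 i by lra.
  have c2' : gamma + tau 0 i <= 2 * gamma by lra.
  have k1 := term_lb _ _ _ _ _ _ c1 c1' b10 np (hb1i p).
  have k2 := term_lb _ _ _ _ _ _ c2 c2' b20 np (hb2i p).
  lra.
have := ler_norm (- L0 0); rewrite normrN => hn.
have := mulr_ge0 b00 np.
have := mulrDl b0 (\sum_(i < m) (2 * gamma * b1 i + 2 * gamma * b2 i)) `|p|.
lra.
Qed.

Lemma quad_le (B c s : R) : 0 < c -> B * s - s ^+ 2 / (2 * c) <= c * B ^+ 2 / 2.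
Proof.
move=> c0.
have e : c * B ^+ 2 / 2 - (B * s - s ^+ 2 / (2 * c)) = (s - c * B) ^+ 2 / (2 * c).
  by field; rewrite gt_eqF.
rewrite -subr_ge0 e; apply: divr_ge0; first exact: sqr_ge0.
by apply: mulr_ge0 => //; apply: ltW.
Qed.

Lemma rad_le (B E c s : R) : 0 < c -> 0 <= B -> 0 <= E -> 0 <= s ->
  s ^+ 2 / (2 * c) <= B * s + E -> s <= 1 + 2 * c * (B + E).
Proof.
move=> c0 B0 E0 s0 h.
have hBE : 0 <= 2 * c * (B + E) by apply: mulr_ge0; [apply: mulr_ge0 => //; apply: ltW | apply: addr_ge0].
have [s1|s1] := lerP s 1; first lra.
have hE : E <= E * s by rewrite ler_peMr //; apply: ltW.
have h2 : s * (s / (2 * c)) <= s * (B + E).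
  have -> : s * (s / (2 * c)) = s ^+ 2 / (2 * c) by rewrite expr2 mulrA.
  rewrite mulrDr; lra.
have c2 : 0 < 2 * c by apply: mulr_gt0.
rewrite ler_pM2l in h2; last lra.
rewrite ler_pdivrMr // in h2.
have : s <= (B + E) * (2 * c) by [].
rewrite mulrC; lra.
Qed.

Lemma ell_bounds : exists a0 B0 c, 0 <= a0 /\ 0 <= B0 /\ 0 < c /\
  (forall tau x, Oc tau -> - a0 <= ell 0 x tau) /\
  forall tau x p, Oc tau ->
    ell p x tau <= a0 + (d%:R * `|x| + B0) * `|p| - `|p| ^+ 2 / (2 * c).
Proof.
have [a0 [b [a00 [b0 Hb]]]] := K0_bounds.
have [c [c0 Hc]] := Qlow A hA.
exists a0, b, c; split => //; split => //; split => //; split.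
  move=> tau x ht; rewrite ellK KfE dotv0l /Q qform0 mul0r addr0.
  by have [h _] := Hb tau ht; lra.
move=> tau x p ht; rewrite ellK KfE.
have [_ h] := Hb tau ht; have := h p => hK.
have hd : dotv p x <= d%:R * `|x| * `|p|.
  apply: le_trans (ler_norm _) _; apply: le_trans (dotv_norm _ _ _) _.
  by rewrite -mulrA [`|p| * _]mulrC mulrA.
have hq : `|p| ^+ 2 / (2 * c) <= Q p / 2.
  rewrite ler_pdivrMr; last by apply: mulr_gt0.
  have := Hc p; rewrite /Q => hc.
  have -> : qform A p / 2 * (2 * c) = c * qform A p by field.
  exact: hc.
rewrite mulrDl; lra.
Qed.

Lemma ell_lipB x tau : lipB (fun p => ell p x tau).
Proof.
have hLq : lipB L.
  apply: (@lipB_ext _ _ _ (fun p => L0 p + (1/2) * qform A p)).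
    by move=> p; rewrite /L0 /Q; field.
  apply: lipB_add; first exact: lipB_cvx.
  by apply: lipB_scale; apply: lipB_qform; exact: symA_.
have hG : lipB (Gsum H1 H2).
  apply: lipB_sum => i; apply: lipB_add; apply: lipB_cvx; [exact: hH1 | exact: hH2].
have hHi i : lipB (H i).
  apply: (@lipB_ext _ _ _ (fun p => H1 i p + (-1) * H2 i p)).
    by move=> p; rewrite hH; ring.
  apply: lipB_add; first exact: lipB_cvx.
  by apply: lipB_scale; apply: lipB_cvx.
apply: (@lipB_ext _ _ _ (fun p => dotv p x + ((-1) * L p + ((- gamma) * Gsum H1 H2 p +
   \sum_(i < m) tau 0 i * H i p)))).
  by move=> p; rewrite /ell; ring.
apply: lipB_add; first exact: lipB_dot.
apply: lipB_add; first exact: lipB_scale.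
apply: lipB_add; first exact: lipB_scale.
by apply: lipB_sum => i; apply: lipB_scale.
Qed.

Lemma max_exists x tau : Oc tau -> exists p, forall q, ell q x tau <= ell p x tau.
Proof.
move=> ht.
have [a0 [B0 [c [a00 [B00 [c0 [H0 Hub]]]]]]] := ell_bounds.
have B0' : 0 <= d%:R * `|x| + B0 by apply: addr_ge0 => //; apply: mulr_ge0.
set B := d%:R * `|x| + B0 in B0' Hub.
set Rr := 1 + 2 * c * (B + (2 * a0 + 1)).
have Rr0 : 0 < Rr.
  have : 0 <= 2 * c * (B + (2 * a0 + 1)).
    by apply: mulr_ge0; [apply: mulr_ge0 => //; apply: ltW | lra].
  rewrite /Rr; lra.
have rad q : - a0 - 1 <= ell q x tau -> `|q| <= Rr.
  move=> hq; apply: rad_le => //; first lra.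
  have := Hub tau x q ht; rewrite -/B; lra.
have inS0 q : closed_ball (0 : 'rV[R]_d) Rr q = (`|q| <= Rr).
  by rewrite closed_ballE // /closed_ball_ /= sub0r normrN.
have inS q : (q \in closed_ball (0 : 'rV[R]_d) Rr) = (`|q| <= Rr).
  apply/idP/idP => [/set_mem|h]; first by rewrite inS0.
  by apply: mem_set; rewrite inS0.
have S0 : closed_ball (0 : 'rV[R]_d) Rr !=set0 by exists 0; apply: closed_ballxx.
have Sc : compact (closed_ball (0 : 'rV[R]_d) Rr).
  apply: bounded_closed_compact; last exact: closed_ball_closed.
  exists Rr; split; first by rewrite num_real.
  move=> M hM q /=; rewrite closed_ballE // /closed_ball_ /= sub0r normrN => hq.
  lra.
have Scont : {within closed_ball (0 : 'rV[R]_d) Rr, continuous (fun q => ell q x tau)}.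
  apply: continuous_subspaceT; apply: lipB_cont; exact: ell_lipB.
have [p hpS hp] := EVT_max_rV S0 Sc Scont.
exists p => q.
have [hq|hq] := lerP `|q| Rr; first by apply: hp; rewrite inS.
have h0 : ell 0 x tau <= ell p x tau by apply: hp; rewrite inS normr0 ltW.
have : ell q x tau < - a0 - 1.
  rewrite ltNge; apply/negP => /rad; lra.
have := H0 tau x ht; lra.
Qed.

Definition pstar x tau := xget 0 [set p | forall q, ell q x tau <= ell p x tau].

Lemma pstar_max x tau : Oc tau -> forall q, ell q x tau <= ell (pstar x tau) x tau.
Proof. by move=> ht; apply: (xgetPex 0 (max_exists x tau ht)). Qed.

Lemma PhiE x tau : Oc tau -> Phi L gamma H1 H2 H x tau = ell (pstar x tau) x tau.
Proof.
move=> ht; rewrite /Phi; apply/eqP; rewrite eq_le; apply/andP; split.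
  apply: ge_sup; first by exists (ell (pstar x tau) x tau), (pstar x tau).
  by move=> y [p ->]; apply: pstar_max.
apply: sup_upper_bound; last by exists (pstar x tau).
split; first by exists (ell (pstar x tau) x tau), (pstar x tau).
by exists (ell (pstar x tau) x tau) => y [p ->]; apply: pstar_max.
Qed.

Lemma max_strong x tau p : Oc tau -> (forall q, ell q x tau <= ell p x tau) ->
  forall q, Q (q - p) / 4 <= ell p x tau - ell q x tau.
Proof.
move=> ht hmax q.
have h0 : (0:R) <= 1/2 by lra.
have h1 : (1/2:R) <= 1 by lra.
have hk := Kf_strong tau q p (1/2) ht h0 h1.
have hm := hmax ((1/2) *: q + (1 - 1/2) *: p).
rewrite !ellK dotvDl !dotvZl in hm *.
lra.
Qed.

Definition Dp p (hx : 'rV[R]_d) (hs : 'rV[R]_m) := dotv p hx + \sum_(i < m) hs 0 i * H i p.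

Lemma ell_diff p x tau y sig : ell p y sig - ell p x tau = Dp p (y - x) (sig - tau).
Proof.
rewrite /ell /Dp dotvBr.
have e : \sum_(i < m) (sig - tau) 0 i * H i p =
  \sum_(i < m) sig 0 i * H i p - \sum_(i < m) tau 0 i * H i p.
  by rewrite -sumrB; apply: eq_bigr => i _; rewrite !mxE; ring.
rewrite e; ring.
Qed.

Lemma pstar_bound X : 0 <= X -> exists RX, 0 <= RX /\
  forall x tau, Oc tau -> `|x| <= X -> `|pstar x tau| <= RX.
Proof.
move=> X0.
have [a0 [B0 [c [a00 [B00 [c0 [H0 Hub]]]]]]] := ell_bounds.
have BX : 0 <= d%:R * X + B0 by apply: addr_ge0 => //; apply: mulr_ge0.
exists (1 + 2 * c * ((d%:R * X + B0) + (2 * a0 + 1))); split.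
  have : 0 <= 2 * c * ((d%:R * X + B0) + (2 * a0 + 1)).
    by apply: mulr_ge0; [apply: mulr_ge0 => //; apply: ltW | lra].
  lra.
move=> x tau ht hx.
apply: rad_le => //; first lra.
have h1 := Hub tau x (pstar x tau) ht.
have h2 := pstar_max x tau ht 0.
have h3 := H0 tau x ht.
have h4 : (d%:R * `|x| + B0) * `|pstar x tau| <= (d%:R * X + B0) * `|pstar x tau|.
  apply: ler_wpM2r => //; rewrite lerD2r; apply: ler_wpM2l => //.
lra.
Qed.

Lemma Dp_lip RX : 0 <= RX -> exists C2, 0 <= C2 /\ forall p q hx hs,
  `|p| <= RX -> `|q| <= RX ->
  `|Dp p hx hs - Dp q hx hs| <= C2 * `|p - q| * Num.max `|hx| `|hs|.
Proof.
move=> R0.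
have hHi i : lipB (H i).
  apply: (@lipB_ext _ _ _ (fun p => H1 i p + (-1) * H2 i p)).
    by move=> p; rewrite hH; ring.
  apply: lipB_add; first exact: lipB_cvx.
  by apply: lipB_scale; apply: lipB_cvx.
have [CH [CH0 HCH]] := lipB_family _ H hHi RX R0.
exists (d%:R + m%:R * CH); split; first by apply: addr_ge0 => //; apply: mulr_ge0.
move=> p q hx hs hp hq.
set N := Num.max `|hx| `|hs|.
have Nx : `|hx| <= N by rewrite le_max lexx.
have Ns : `|hs| <= N by rewrite le_max lexx orbT.
have e : Dp p hx hs - Dp q hx hs = dotv (p - q) hx + \sum_(i < m) hs 0 i * (H i p - H i q).
  rewrite /Dp dotvBl.
  have -> : \sum_(i < m) hs 0 i * (H i p - H i q) =
     \sum_(i < m) hs 0 i * H i p - \sum_(i < m) hs 0 i * H i q.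
    by rewrite -sumrB; apply: eq_bigr => i _; ring.
  ring.
rewrite e; apply: le_trans (ler_normD _ _) _.
have np := normr_ge0 (p - q).
have e1 : `|dotv (p - q) hx| <= d%:R * `|p - q| * N.
  apply: le_trans (dotv_norm _ _ _) _; apply: ler_wpM2l; [exact: mulr_ge0 | exact: Nx].
have e2 : `|\sum_(i < m) hs 0 i * (H i p - H i q)| <= m%:R * CH * `|p - q| * N.
  apply: le_trans (ler_norm_sum _ _ _) _.
  have -> : m%:R * CH * `|p - q| * N = \sum_(i < m) (N * (CH * `|p - q|)).
    by rewrite sumr_const card_ord -mulr_natl; ring.
  apply: ler_sum => i _; rewrite normrM; apply: ler_pM => //.
    by apply: le_trans (rv_coord_le _ hs i) Ns.
  exact: HCH.
have := mulrDl (d%:R) (m%:R * CH) (`|p - q|).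
move=> e3; rewrite e3 mulrDl; lra.
Qed.

Lemma qformN (v : 'rV[R]_d) : Q (- v) = Q v.
Proof. by rewrite /Q -scaleN1r qformZ sqrrN expr1n mul1r. Qed.

Lemma main_est X : 0 <= X -> exists K, 0 <= K /\
  forall x tau y sig, Oc tau -> Oc sig -> `|x| <= X -> `|y| <= X ->
  let N := Num.max `|y - x| `|sig - tau| in
  [/\ `|pstar y sig - pstar x tau| <= K * N,
      `|Phi L gamma H1 H2 H y sig - Phi L gamma H1 H2 H x tau
         - Dp (pstar x tau) (y - x) (sig - tau)| <= K * N ^+ 2 &
      forall hx hs, `|Dp (pstar y sig) hx hs - Dp (pstar x tau) hx hs|
         <= K * N * Num.max `|hx| `|hs|].
Proof.
move=> X0.
have [RX [RX0 HRX]] := pstar_bound X X0.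
have [C2 [C20 HC2]] := Dp_lip RX RX0.
have [c [c0 Hc]] := Qlow A hA.
set LP := 2 * c * C2.
have LP0 : 0 <= LP by apply: mulr_ge0 => //; apply: mulr_ge0 => //; apply: ltW.
exists (LP + C2 * LP); split; first by apply: addr_ge0 => //; apply: mulr_ge0.
move=> x tau y sig ht hs hx hy N.
have N0 : 0 <= N by rewrite le_max normr_ge0.
set pz := pstar x tau; set pw := pstar y sig.
have bz : `|pz| <= RX by apply: HRX.
have bw : `|pw| <= RX by apply: HRX.
have s1 := max_strong x tau pz ht (pstar_max x tau ht) pw.
have s2 := max_strong y sig pw hs (pstar_max y sig hs) pz.
have eQ : Q (pz - pw) = Q (pw - pz) by rewrite -qformN opprB.
have d1 := ell_diff pz x tau y sig.
have d2 := ell_diff pw x tau y sig.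
have hD := HC2 pw pz (y - x) (sig - tau) bw bz.
rewrite -/N in hD.
set Dl := `|pw - pz|.
have Dl0 : 0 <= Dl by apply: normr_ge0.
have hQ : Q (pw - pz) / 2 <= C2 * Dl * N.
  apply: le_trans _ (le_trans (ler_norm _) hD); lra.
have hE1 : Dl <= LP * N.
  have hq := Hc (pw - pz); rewrite -/Dl in hq.
  have hq2 : Dl ^+ 2 <= Dl * (LP * N).
    apply: le_trans hq _.
    have : c * Q (pw - pz) <= c * (2 * (C2 * Dl * N)).
      by apply: ler_wpM2l; [apply: ltW | lra].
    have -> : Dl * (LP * N) = c * (2 * (C2 * Dl * N)) by rewrite /LP; ring.
    by rewrite /Q.
  have [D0|Dp0] := eqVneq Dl 0; first by rewrite D0; apply: mulr_ge0.
  have Dpos : 0 < Dl by rewrite lt_neqAle eq_sym Dp0 Dl0.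
  by rewrite expr2 ler_pM2l in hq2.
have KLP : LP * N <= (LP + C2 * LP) * N.
  by apply: ler_wpM2r => //; rewrite lerDl; apply: mulr_ge0.
have KC : C2 * LP <= LP + C2 * LP by rewrite lerDr.
split.
- by apply: le_trans hE1 KLP.
- rewrite (PhiE x tau ht) (PhiE y sig hs) -/pz -/pw.
  have g1 := pstar_max y sig hs pz; rewrite -/pw in g1.
  have hup : Dp pw (y - x) (sig - tau) - Dp pz (y - x) (sig - tau) <= C2 * LP * N ^+ 2.
    apply: le_trans (le_trans (ler_norm _) hD) _.
    rewrite expr2 !mulrA; apply: ler_wpM2r => //.
    rewrite -!mulrA.
    have -> : 2 * (c * (C2 * N)) = LP * N by rewrite /LP; ring.
    by apply: ler_wpM2l => //; exact: hE1.
  have hK : C2 * LP * N ^+ 2 <= (LP + C2 * LP) * N ^+ 2.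
    by apply: ler_wpM2r => //; apply: sqr_ge0.
  rewrite ler_norml; apply/andP; split.
    have := sqr_ge0 N; have := mulr_ge0 (addr_ge0 LP0 (mulr_ge0 C20 LP0)) (sqr_ge0 N).
    lra.
  have g2 := pstar_max x tau ht pw; rewrite -/pz in g2.
  lra.
- move=> hx' hs'.
  have hD' := HC2 pw pz hx' hs' bw bz.
  apply: le_trans hD' _.
  have hM : `|hx'| <= Num.max `|hx'| `|hs'| by rewrite le_max lexx.
  set M := Num.max `|hx'| `|hs'| in hM *.
  have M0 : 0 <= M by apply: le_trans hM.
  apply: ler_wpM2r => //.
  apply: le_trans (_ : C2 * (LP * N) <= _).
    by apply: ler_wpM2l.
  rewrite mulrA; apply: ler_wpM2r => //.
Qed.

Lemma Phi_convex tau : Oc tau -> convex_fun (fun x => Phi L gamma H1 H2 H x tau).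
Proof.
move=> ht x y t /andP[t0 t1] /=.
rewrite !(PhiE _ _ ht).
set pw := pstar (t *: x + (1 - t) *: y) tau.
have e : ell pw (t *: x + (1 - t) *: y) tau = t * ell pw x tau + (1 - t) * ell pw y tau.
  by rewrite !ellK dotvDr !dotvZr; ring.
rewrite e.
have h1 := pstar_max x tau ht pw; have h2 := pstar_max y tau ht pw.
have t1' : 0 <= 1 - t by lra.
have := ler_wpM2l t0 h1; have := ler_wpM2l t1' h2; lra.
Qed.

Lemma Phi_hessle tau : Oc tau -> hess_le (fun x => Phi L gamma H1 H2 H x tau) (invmx A).
Proof.
move=> ht x y t /andP[t0 t1] /=.
rewrite !(PhiE _ _ ht).
set w := t *: x + (1 - t) *: y.
set px := pstar x tau; set py := pstar y tau; set pw := pstar w tau.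
have hm := pstar_max w tau ht (t *: px + (1 - t) *: py); rewrite -/pw in hm.
have hk := Kf_strong tau px py t ht t0 t1.
have ineq := ineqQ A hA (px - py) (x - y).
have tt : 0 <= t * (1 - t) by apply: mulr_ge0; lra.
have ineq' := ler_wpM2l tt ineq.
have qc := qform_comb (invmx A) x y t (symA' A hA).
rewrite /w in hm qc *.
rewrite !ellK in hm *.
rewrite dotvDl !dotvZl !dotvDr !dotvZr in hm.
rewrite !dotvBl !dotvBr in ineq'.
rewrite /Q in hk.
rewrite qc dotvDr !dotvZr.
lra.
Qed.

Lemma omega_nbhs (tau : 'rV[R]_m) : (forall i, - gamma < tau 0 i < gamma) ->
  exists r, 0 < r /\ forall h : 'rV[R]_m, `|h| < r -> Oc (h + tau).
Proof.
move=> ht.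
set mg := \big[Num.max/0]_(i < m) `|tau 0 i|.
have hmg : mg < gamma.
  apply: bigmax_lt => // i _; rewrite ltr_norml; exact: ht.
exists (gamma - mg); split; first lra.
move=> h hh i; rewrite mxE; apply: le_trans (ler_normD _ _) _.
have h1 := rv_coord_le _ h i.
have h2 : `|tau 0 i| <= mg by rewrite /mg; apply: (le_bigmax _ (fun i => `|tau 0 i|) i).
lra.
Qed.

Lemma omega_Oc (tau : 'rV[R]_m) : (forall i, - gamma < tau 0 i < gamma) -> Oc tau.
Proof. by move=> ht i; rewrite ler_norml; have /andP[h1 h2] := ht i; rewrite !ltW. Qed.

Lemma Dp_bound p : exists CD, 0 <= CD /\ forall hx hs, `|Dp p hx hs| <= CD * Num.max `|hx| `|hs|.
Proof.
exists (d%:R * `|p| + \sum_(i < m) `|H i p|); split.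
  by apply: addr_ge0; [apply: mulr_ge0 | apply: sumr_ge0].
move=> hx hs; set N := Num.max `|hx| `|hs|.
have Nx : `|hx| <= N by rewrite le_max lexx.
have Ns : `|hs| <= N by rewrite le_max lexx orbT.
rewrite /Dp; apply: le_trans (ler_normD _ _) _; rewrite mulrDl.
apply: lerD.
  apply: le_trans (dotv_norm _ _ _) _; apply: ler_wpM2l; [exact: mulr_ge0 | exact: Nx].
apply: le_trans (ler_norm_sum _ _ _) _; rewrite mulr_suml.
apply: ler_sum => i _; rewrite normrM mulrC; apply: ler_wpM2l => //.
by apply: le_trans (rv_coord_le _ hs i) Ns.
Qed.

Lemma Dp_lin p : forall (a : R) (u v : 'rV[R]_d * 'rV[R]_m),
  Dp p (a *: u + v).1 (a *: u + v).2 = a * Dp p u.1 u.2 + Dp p v.1 v.2.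
Proof.
move=> a u v; rewrite /Dp /= dotvDr dotvZr.
have e : \sum_(i < m) (a *: u.2 + v.2) 0 i * H i p =
  a * \sum_(i < m) u.2 0 i * H i p + \sum_(i < m) v.2 0 i * H i p.
  rewrite mulr_sumr -big_split; apply: eq_bigr => i _; by rewrite !mxE mulrDl -mulrA.
rewrite e; ring.
Qed.

Lemma quad_at (x : 'rV[R]_d) (tau : 'rV[R]_m) : (forall i, - gamma < tau 0 i < gamma) ->
  exists r K, 0 < r /\ 0 <= K /\ forall hx hs, Num.max `|hx| `|hs| < r ->
  `|Phi L gamma H1 H2 H (hx + x) (hs + tau) - Phi L gamma H1 H2 H x tau
     - Dp (pstar x tau) hx hs| <= K * (Num.max `|hx| `|hs|) ^+ 2.
Proof.
move=> ht.
have [r0 [r00 Hr0]] := omega_nbhs tau ht.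
have X0 : 0 <= `|x| + 1 by have := normr_ge0 x; lra.
have [K [K0 HK]] := main_est (`|x| + 1) X0.
exists (Num.min r0 1), K; split; first by rewrite lt_min r00 ltr01.
split => // hx hs hmx.
have hxl : `|hx| <= Num.max `|hx| `|hs| by rewrite le_max lexx.
have hsl : `|hs| <= Num.max `|hx| `|hs| by rewrite le_max lexx orbT.
move: hmx; rewrite lt_min => /andP[m1 m2].
have Ot : Oc (hs + tau) by apply: Hr0; lra.
have hX : `|hx + x| <= `|x| + 1 by apply: le_trans (ler_normD _ _) _; lra.
have hxX : `|x| <= `|x| + 1 by lra.
have [_ E2 _] := HK x tau (hx + x) (hs + tau) (omega_Oc tau ht) Ot hxX hX.
by move: E2; rewrite !addrK.
Qed.

Lemma max0n (a : R) : Num.max `|a| `|0 : R| = `|a|.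
Proof. by rewrite normr0; apply/max_idPl; exact: normr_ge0. Qed.

Lemma derive_x (x : 'rV[R]_d) (tau : 'rV[R]_m) (v : 'rV[R]_d) : (forall i, - gamma < tau 0 i < gamma) ->
  derive (fun y => Phi L gamma H1 H2 H y tau) x v = dotv (pstar x tau) v.
Proof.
move=> ht; have [r [K [r0 [K0 HK]]]] := quad_at x tau ht.
apply: (@quad_derive R _ _ _ _ _ r K r0 K0).
  by move=> t u; rewrite dotvZr.
move=> h hh.
have e1 : Num.max `|h| `|0 : 'rV[R]_m| = `|h|.
  by rewrite normr0; apply/max_idPl; exact: normr_ge0.
have := HK h 0; rewrite e1 add0r => /(_ hh).
have -> : Dp (pstar x tau) h 0 = dotv (pstar x tau) h.
  by rewrite /Dp big1 ?addr0 // => i _; rewrite mxE mul0r.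
by [].
Qed.

Lemma derive_tau (x : 'rV[R]_d) (tau : 'rV[R]_m) (v : 'rV[R]_m) : (forall i, - gamma < tau 0 i < gamma) ->
  derive (fun t => Phi L gamma H1 H2 H x t) tau v =
  \sum_(i < m) v 0 i * H i (pstar x tau).
Proof.
move=> ht; have [r [K [r0 [K0 HK]]]] := quad_at x tau ht.
apply: (@quad_derive R _ (fun t => Phi L gamma H1 H2 H x t) tau v (fun u => \sum_(i < m) u 0 i * H i (pstar x tau)) r K r0 K0).
  move=> t u; rewrite mulr_sumr; apply: eq_bigr => i _; rewrite mxE; ring.
move=> h hh.
have e1 : Num.max `|0 : 'rV[R]_d| `|h| = `|h|.
  by rewrite normr0; apply/max_idPr; exact: normr_ge0.
have := HK 0 h; rewrite e1 add0r => /(_ hh).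
have -> : Dp (pstar x tau) 0 h = \sum_(i < m) h 0 i * H i (pstar x tau).
  by rewrite /Dp dotv0r add0r.
by [].
Qed.

Lemma gradx_eq (x : 'rV[R]_d) (tau : 'rV[R]_m) : (forall i, - gamma < tau 0 i < gamma) ->
  gradx (Phi L gamma H1 H2 H) x tau = pstar x tau.
Proof.
by move=> ht; apply/rowP => j; rewrite mxE derive_x // dotv_unit.
Qed.

Lemma sum_unit (c : 'I_m -> R) i : \sum_(k < m) (unit_rv i : 'rV[R]_m) 0 k * c k = c i.
Proof.
rewrite (bigD1 i) //= big1 => [|k ki]; rewrite /unit_rv mxE.
  by rewrite !eqxx /= mul1r addr0.
by rewrite (negbTE ki) andbF mul0r.
Qed.

Lemma Dp0 p : Dp p 0 0 = 0.
Proof. by rewrite /Dp dotv0r add0r big1 // => i _; rewrite mxE mul0r. Qed.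

Lemma DpZ p (t : R) (u : 'rV[R]_d * 'rV[R]_m) :
  Dp p (t *: u).1 (t *: u).2 = t * Dp p u.1 u.2.
Proof. by have := Dp_lin p t u 0; rewrite addr0 /= Dp0 addr0. Qed.

Lemma quad_z (z : 'rV[R]_d * 'rV[R]_m) : Omega gamma z ->
  exists r K, 0 < r /\ 0 <= K /\ forall h : 'rV[R]_d * 'rV[R]_m, `|h| < r ->
  `|Phi L gamma H1 H2 H (h + z).1 (h + z).2 - Phi L gamma H1 H2 H z.1 z.2
     - Dp (pstar z.1 z.2) h.1 h.2| <= K * `|h| ^+ 2.
Proof.
move=> hz; have [r [K [r0 [K0 HK]]]] := quad_at z.1 z.2 hz.
exists r, K; split => //; split => // h; rewrite prod_normE => hh.
exact: HK.
Qed.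

Lemma derive_z (z : 'rV[R]_d * 'rV[R]_m) v : Omega gamma z ->
  derive (fun z => Phi L gamma H1 H2 H z.1 z.2) z v = Dp (pstar z.1 z.2) v.1 v.2.
Proof.
move=> hz; have [r [K [r0 [K0 HK]]]] := quad_z z hz.
apply: (@quad_derive R _ (fun z => Phi L gamma H1 H2 H z.1 z.2) z v
   (fun u => Dp (pstar z.1 z.2) u.1 u.2) r K r0 K0) => //.
by move=> t u; apply: DpZ.
Qed.

Lemma main_thm :
  let F := Phi L gamma H1 H2 H in
  C11 (fun z : 'rV[R]_d * 'rV[R]_m => F z.1 z.2) (Omega gamma) /\
  (forall tau : 'rV[R]_m, (forall i, - gamma < tau 0 i < gamma) ->
     convex_fun (fun x => F x tau) /\ hess_le (fun x => F x tau) (invmx A)) /\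
  (forall (x : 'rV[R]_d) (tau : 'rV[R]_m), (forall i, - gamma < tau 0 i < gamma) ->
     forall i : 'I_m,
       derive (fun t => F x t) tau (unit_rv i) = H i (gradx F x tau)).
Proof.
move=> F; split; last split.
- split.
  + move=> z hz; have [r [K [r0 [K0 HK]]]] := quad_z z hz.
    pose g := fun h : 'rV[R]_d * 'rV[R]_m => Dp (pstar z.1 z.2) h.1 h.2.
    have glin : linear g by move=> a u v; rewrite /g Dp_lin.
    pose gL : {linear _ -> R} := HB.pack g (GRing.isLinear.Build _ _ _ _ g glin).
    apply: (@diff_from R _ _ z gL).
      apply: lip_cont => x.
      have [CD [CD0 HCD]] := Dp_bound (pstar z.1 z.2).
      exists 1, CD; split => //; split => // y _.
      have e : gL y - gL x = g (y - x).
        have h1 := glin (-1) x y.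
        have e2 : (-1) *: x + y = y - x by rewrite scaleN1r addrC.
        rewrite e2 in h1; rewrite h1 scaleN1r [- _ + _]addrC.
        by [].
      by rewrite e /g; apply: le_trans (HCD _ _) _; rewrite prod_normE.
    by apply: (@quad_o R _ _ z gL r K r0 K0).
  + move=> z0 hz0.
    have X0 : 0 <= `|z0.1| + 1 by have := normr_ge0 z0.1; lra.
    have [K [K0 HK]] := main_est (`|z0.1| + 1) X0.
    exists 1; split => //; exists K => z w v hz hw bz bw.
    rewrite /F !derive_z //.
    have bnd u : ball z0 1 u -> `|u.1| <= `|z0.1| + 1.
      rewrite -ball_normE /ball_ /= => hn.
      have h1 : `|(z0 - u).1| <= `|z0 - u| by rewrite prod_normE le_max lexx.
      have e1 : (z0 - u).1 = z0.1 - u.1 by [].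
      rewrite e1 in h1.
      have := ler_normD (u.1 - z0.1) z0.1; rewrite subrK distrC.
      lra.
    have [_ _ E3] := HK w.1 w.2 z.1 z.2 (omega_Oc _ hw) (omega_Oc _ hz) (bnd _ bw) (bnd _ bz).
    apply: le_trans (E3 v.1 v.2) _.
    by rewrite -!prod_normE.
- move=> tau ht; split.
    exact: Phi_convex (omega_Oc tau ht).
  exact: Phi_hessle (omega_Oc tau ht).
- move=> x tau ht i.
  by rewrite /F derive_tau // gradx_eq // sum_unit.
Qed.

End Main.

Theorem lemma2p4 (R : realType) (d m : nat)
  (H1 H2 H : 'I_m -> 'rV[R]_d -> R)
  (hH1 : forall i, convex_fun (H1 i)) (hH2 : forall i, convex_fun (H2 i))
  (hH : forall i p, H i p = H1 i p - H2 i p)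
  (gamma : R) (hgamma : 0 < gamma)
  (A : 'M[R]_d) (hA : posdef_sym A)
  (L : 'rV[R]_d -> R) (hL : hess_ge L A) :
  let F := Phi L gamma H1 H2 H in
  C11 (fun z : 'rV[R]_d * 'rV[R]_m => F z.1 z.2) (Omega gamma) /\
  (forall tau : 'rV[R]_m, (forall i, - gamma < tau 0 i < gamma) ->
     convex_fun (fun x => F x tau) /\ hess_le (fun x => F x tau) (invmx A)) /\
  (forall (x : 'rV[R]_d) (tau : 'rV[R]_m), (forall i, - gamma < tau 0 i < gamma) ->
     forall i : 'I_m,
       derive (fun t => F x t) tau (unit_rv i) = H i (gradx F x tau)).
Proof.
exact: (@main_thm R d m H1 H2 H hH1 hH2 hH gamma hgamma A hA L hL).
Qed.
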